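(* There exist constants $a,b>0$ such that for every integer $R\ge2$, $$\frac{a}{R}<\pi-\Vert T_R\Vert<\frac{b\log R}{R}.$$
   Context: $T_R$ is the $R\times R$ matrix with $(T_R)_{m,n}=0$ if $m=n$ and $(T_R)_{m,n}=\frac{1}{m-n}$ if $m\ne n$, $1\le m,n\le R$. $\Vert\cdot\Vert$ is the operator norm induced by the Euclidean norm on $\mathbb{C}^R$. *)

(* Defs.v *)
From Stdlib Require Import Reals.
Open Scope R_scope.

Fixpoint sum1 (N : nat) (f : nat -> R) : R :=
  match N with
  | O => 0
  | S k => sum1 k f + f (S k)
  end.

(* Entry (m,n) of T_N: 0 on the diagonal, 1/(m-n) otherwise (indices 1..N). *)
Definition Tent (m n : nat) : R :=
  if Nat.eqb m n then 0 else / (INR m - INR n).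

(* Complex numbers as pairs (real part, imaginary part);
   a vector of C^N is given by its coordinates at indices 1..N. *)
Definition cvec := nat -> (R * R).

Definition cnorm (N : nat) (z : cvec) : R :=
  sqrt (sum1 N (fun n => fst (z n) ^ 2 + snd (z n) ^ 2)).

Definition Tapply (N : nat) (z : cvec) : cvec :=
  fun m => (sum1 N (fun n => Tent m n * fst (z n)),
            sum1 N (fun n => Tent m n * snd (z n))).

(* The set { ||T_N z|| : ||z|| <= 1 }; the operator norm is its supremum. *)
Definition T_image_norms (N : nat) (r : R) : Prop :=
  exists z : cvec, cnorm N z <= 1 /\ r = cnorm N (Tapply N z).

(* Main.v *)
Require Import Defs.
From Stdlib Require Import Reals Lra Lia.
From Coquelicot Require Import Coquelicot.
Open Scope R_scope.

Lemma sum1_ext N f g : (forall n, (1 <= n <= N)%nat -> f n = g n) -> sum1 N f = sum1 N g.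
Proof. induction N; simpl; intros H; auto. rewrite IHN; [rewrite H; auto; lia|]. intros; apply H; lia. Qed.

Lemma sum1_plus N f g : sum1 N (fun n => f n + g n) = sum1 N f + sum1 N g.
Proof. induction N; simpl; [ring|rewrite IHN; ring]. Qed.

Lemma sum1_scal N c f : sum1 N (fun n => c * f n) = c * sum1 N f.
Proof. induction N; simpl; [ring|rewrite IHN; ring]. Qed.

Lemma sum1_opp N f : sum1 N (fun n => - f n) = - sum1 N f.
Proof. induction N; simpl; [ring|rewrite IHN; ring]. Qed.

Lemma sum1_zero N f : (forall n, (1 <= n <= N)%nat -> f n = 0) -> sum1 N f = 0.
Proof. intros H. rewrite (sum1_ext N f (fun _ => 0)); auto. clear H. induction N; simpl; auto. rewrite IHN; ring. Qed.

Lemma sum1_le N f g : (forall n, (1 <= n <= N)%nat -> f n <= g n) -> sum1 N f <= sum1 N g.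
Proof. induction N; simpl; intros H; [lra|]. assert (sum1 N f <= sum1 N g) by (apply IHN; intros; apply H; lia).
 assert (f (S N) <= g (S N)) by (apply H; lia). lra. Qed.

Lemma sum1_nonneg N f : (forall n, (1 <= n <= N)%nat -> 0 <= f n) -> 0 <= sum1 N f.
Proof. intros H. replace 0 with (sum1 N (fun _ => 0)). apply sum1_le; auto.
 clear H; induction N; simpl; auto; rewrite IHN; ring. Qed.

Lemma sum1_split d k f : sum1 (d + k) f = sum1 d f + sum1 k (fun n => f (d + n)%nat).
Proof. induction k; simpl. rewrite Nat.add_0_r; ring. rewrite <- plus_n_Sm. simpl. rewrite IHk. ring. Qed.

Lemma sum1_swap N M (f : nat -> nat -> R) :
  sum1 N (fun m => sum1 M (fun n => f m n)) = sum1 M (fun n => sum1 N (fun m => f m n)).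
Proof. induction N; simpl. symmetry; apply sum1_zero; auto.
 rewrite IHN. rewrite <- sum1_plus. reflexivity. Qed.

Lemma sum1_mul N M f g : sum1 N f * sum1 M g = sum1 N (fun m => sum1 M (fun n => f m * g n)).
Proof. induction N; simpl. ring. rewrite <- IHN. rewrite sum1_scal. ring. Qed.

Lemma CS2 N a b c d :
  (sum1 N (fun n => a n * c n + b n * d n))^2 <=
  sum1 N (fun n => a n ^2 + b n ^2) * sum1 N (fun n => c n ^2 + d n ^2).
Proof. induction N; cbn [sum1]. nra.
 set (SS := sum1 N (fun n => a n * c n + b n * d n)) in *.
 set (A := sum1 N (fun n => a n ^2 + b n ^2)) in *.
 set (B := sum1 N (fun n => c n ^2 + d n ^2)) in *.
 assert (0 <= A) by (apply sum1_nonneg; intros; nra).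
 assert (0 <= B) by (apply sum1_nonneg; intros; nra).
 set (p := a (S N)); set (q := b (S N)); set (r := c (S N)); set (s := d (S N)).
 assert (H1: (2*(p*r+q*s)*SS) <= A*(r^2+s^2) + (p^2+q^2)*B).
 { assert (HH: (2*(p*r+q*s)*SS)^2 <= (A*(r^2+s^2) + (p^2+q^2)*B)^2).
   { assert ((p*r+q*s)^2 <= (p^2+q^2)*(r^2+s^2)) by (pose proof (pow2_ge_0 (p*s-q*r)); nra).
     assert (4*(p*r+q*s)^2*SS^2 <= 4*((p^2+q^2)*(r^2+s^2))*(A*B)).
     { apply Rmult_le_compat; [pose proof (pow2_ge_0 (p*r+q*s)); lra|apply pow2_ge_0|lra|exact IHN]. }
     assert (4*((p^2+q^2)*(r^2+s^2))*(A*B) <= (A*(r^2+s^2) + (p^2+q^2)*B)^2) by (pose proof (pow2_ge_0 (A*(r^2+s^2) - (p^2+q^2)*B)); nra).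
     nra. }
   assert (0 <= A*(r^2+s^2) + (p^2+q^2)*B) by nra.
   destruct (Rle_or_lt (2*(p*r+q*s)*SS) 0); [lra|]. nra. }
 assert ((p*r+q*s)^2 <= (p^2+q^2)*(r^2+s^2)) by (pose proof (pow2_ge_0 (p*s-q*r)); nra).
 replace ((SS + (p*r+q*s))^2) with (SS^2 + 2*(p*r+q*s)*SS + (p*r+q*s)^2) by ring.
 replace ((A + (p^2+q^2)) * (B + (r^2+s^2))) with (A*B + (A*(r^2+s^2) + (p^2+q^2)*B) + (p^2+q^2)*(r^2+s^2)) by ring.
 lra. Qed.

Lemma CS1 N f : (sum1 N f)^2 <= INR N * sum1 N (fun n => f n ^2).
Proof.
 pose proof (CS2 N f (fun _ => 0) (fun _ => 1) (fun _ => 0)) as H. simpl in H.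
 replace (sum1 N (fun n => f n * 1 + 0 * 0)) with (sum1 N f) in H by (apply sum1_ext; intros; ring).
 replace (sum1 N (fun n => f n * (f n * 1) + 0 * (0 * 1))) with (sum1 N (fun n => f n ^2)) in H by (apply sum1_ext; intros; ring).
 replace (sum1 N (fun _ => 1 * (1 * 1) + 0 * (0 * 1))) with (INR N) in H.
 rewrite Rmult_comm; exact H.
 clear H; induction N; simpl; auto. rewrite <- IHN. destruct N; simpl; ring. Qed.

Lemma cont_der (f : R -> R) x : ex_derive f x -> continuous f x.
Proof. intros H. apply (ex_derive_continuous f). exact H. Qed.

Lemma is_RInt_eqv (f : R -> R) a b l l' : l = l' -> is_RInt f a b l -> is_RInt f a b l'.
Proof. intros ->; auto. Qed.

Lemma trig_int m n : sin (2*PI*(INR m - INR n)) = 0 /\ cos (2*PI*(INR m - INR n)) = 1.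
Proof.
 assert (Hs: forall k, sin (2*PI*INR k) = 0).
 { intros k. pose proof (sin_period 0 k). rewrite sin_0 in H. rewrite <- H. f_equal. ring. }
 assert (Hc: forall k, cos (2*PI*INR k) = 1).
 { intros k. pose proof (cos_period 0 k). rewrite cos_0 in H. rewrite <- H. f_equal. ring. }
 replace (2*PI*(INR m - INR n)) with (2*PI*INR m - 2*PI*INR n) by ring.
 rewrite sin_minus, cos_minus, !Hs, !Hc. split; ring. Qed.

Lemma int_cos_c c : c <> 0 -> sin c = 0 -> cos c = 1 -> is_RInt (fun t => cos (c*t)) 0 1 0.
Proof. intros Hc Hs Hco.
 apply is_RInt_eqv with (minus ((fun t => sin (c*t)/c) 1) ((fun t => sin (c*t)/c) 0)).
 { unfold minus, plus, opp; simpl. rewrite Rmult_1_r, Rmult_0_r, sin_0, Hs. field. auto. }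
 apply (is_RInt_derive (fun t => sin (c*t)/c)).
 - intros x _. auto_derive; auto. field. auto.
 - intros x _. apply cont_der. auto_derive. auto.
Qed.

Lemma int_sin_c c : c <> 0 -> sin c = 0 -> cos c = 1 -> is_RInt (fun t => sin (c*t)) 0 1 0.
Proof. intros Hc Hs Hco.
 apply is_RInt_eqv with (minus ((fun t => - cos (c*t)/c) 1) ((fun t => - cos (c*t)/c) 0)).
 { unfold minus, plus, opp; simpl. rewrite Rmult_1_r, Rmult_0_r, cos_0, Hco. field. auto. }
 apply (is_RInt_derive (fun t => - cos (c*t)/c)).
 - intros x _. auto_derive; auto. field. auto.
 - intros x _. apply cont_der. auto_derive. auto.
Qed.

Lemma int_wcos_c c : c <> 0 -> sin c = 0 -> cos c = 1 -> is_RInt (fun t => (1/2 - t) * cos (c*t)) 0 1 0.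
Proof. intros Hc Hs Hco.
 apply is_RInt_eqv with (minus ((fun t => (1/2-t)*sin (c*t)/c - cos (c*t)/(c*c)) 1) ((fun t => (1/2-t)*sin (c*t)/c - cos(c*t)/(c*c)) 0)).
 { unfold minus, plus, opp; simpl. rewrite Rmult_1_r, Rmult_0_r, cos_0, sin_0, Hco, Hs. field. auto. }
 apply (is_RInt_derive (fun t => (1/2-t)*sin (c*t)/c - cos (c*t)/(c*c))).
 - intros x _. auto_derive; auto. field. auto.
 - intros x _. apply cont_der. auto_derive. auto.
Qed.

Lemma int_wsin_c c : c <> 0 -> sin c = 0 -> cos c = 1 -> is_RInt (fun t => (1/2 - t) * sin (c*t)) 0 1 (1/c).
Proof. intros Hc Hs Hco.
 apply is_RInt_eqv with (minus ((fun t => -(1/2-t)*cos (c*t)/c - sin (c*t)/(c*c)) 1) ((fun t => -(1/2-t)*cos (c*t)/c - sin(c*t)/(c*c)) 0)).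
 { unfold minus, plus, opp; simpl. rewrite Rmult_1_r, Rmult_0_r, cos_0, sin_0, Hco, Hs. field. auto. }
 apply (is_RInt_derive (fun t => -(1/2-t)*cos (c*t)/c - sin (c*t)/(c*c))).
 - intros x _. auto_derive; auto. field. auto.
 - intros x _. apply cont_der. auto_derive. auto.
Qed.

Lemma int_const (c : R) : is_RInt (fun _ => c) 0 1 c.
Proof. eapply is_RInt_eqv; [|apply is_RInt_const]. unfold scal; simpl; unfold mult; simpl. ring. Qed.

Lemma int_lin : is_RInt (fun t => (1/2 - t)) 0 1 0.
Proof.
 apply is_RInt_eqv with (minus ((fun t => t/2 - t*t/2) 1) ((fun t => t/2 - t*t/2) 0)).
 { unfold minus, plus, opp; simpl. field. }
 apply (is_RInt_derive (fun t => t/2 - t*t/2)).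
 - intros x _. auto_derive; auto. field.
 - intros x _. apply cont_der. auto_derive. auto.
Qed.

Definition kk (m n : nat) := 2*PI*(INR m - INR n).

Lemma kk_nz m n : m <> n -> kk m n <> 0.
Proof. intros H. unfold kk. pose proof PI_RGT_0. intro E.
 assert (INR m - INR n = 0) by nra. apply H, INR_eq. lra. Qed.

Lemma I_cos m n : is_RInt (fun t => cos (kk m n * t)) 0 1 (if Nat.eqb m n then 1 else 0).
Proof. destruct (Nat.eqb_spec m n).
 - subst. eapply is_RInt_ext; [|apply int_const]. intros x _. unfold kk. simpl.
   replace (2 * PI * (INR n - INR n) * x) with 0 by ring. rewrite cos_0; auto.
 - destruct (trig_int m n). apply int_cos_c; auto. apply kk_nz; auto. Qed.

Lemma I_sin m n : is_RInt (fun t => sin (kk m n * t)) 0 1 0.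
Proof. destruct (Nat.eqb_spec m n).
 - subst. eapply is_RInt_ext; [|apply (int_const 0)]. intros x _. unfold kk. simpl.
   replace (2 * PI * (INR n - INR n) * x) with 0 by ring. rewrite sin_0; auto.
 - destruct (trig_int m n). apply int_sin_c; auto. apply kk_nz; auto. Qed.

Lemma I_wcos m n : is_RInt (fun t => (1/2 - t) * cos (kk m n * t)) 0 1 0.
Proof. destruct (Nat.eqb_spec m n).
 - subst. eapply is_RInt_ext; [|apply int_lin]. intros x _. unfold kk. simpl.
   replace (2 * PI * (INR n - INR n) * x) with 0 by ring. rewrite cos_0; ring.
 - destruct (trig_int m n). apply int_wcos_c; auto. apply kk_nz; auto. Qed.

Lemma I_wsin m n : is_RInt (fun t => (1/2 - t) * sin (kk m n * t)) 0 1 (Tent m n / (2*PI)).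
Proof. unfold Tent. destruct (Nat.eqb_spec m n).
 - subst. eapply is_RInt_eqv; [|eapply is_RInt_ext; [|apply (int_const 0)]].
   + change (0 = 0 / (2*PI)). field. apply PI_neq0.
   + intros x _. unfold kk. simpl. replace (2 * PI * (INR n - INR n) * x) with 0 by ring. rewrite sin_0; ring.
 - destruct (trig_int m n). eapply is_RInt_eqv; [|apply int_wsin_c; auto; apply kk_nz; auto].
   change (1 / kk m n = / (INR m - INR n) / (2 * PI)). unfold kk. field. split; [intro E; apply n0, INR_eq; lra|apply PI_neq0]. Qed.

Definition th (n : nat) (t : R) := 2*PI*INR n*t.
Definition Ere (z : cvec) N t := sum1 N (fun n => fst (z n) * cos (th n t) - snd (z n) * sin (th n t)).
Definition Eim (z : cvec) N t := sum1 N (fun n => fst (z n) * sin (th n t) + snd (z n) * cos (th n t)).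
Definition GN z N t := Ere z N t ^2 + Eim z N t ^2.
Definition Bf N (u v : nat -> R) := sum1 N (fun m => u m * sum1 N (fun n => Tent m n * v n)).

Lemma Tent_anti m n : Tent n m = - Tent m n.
Proof. unfold Tent. rewrite Nat.eqb_sym. destruct (Nat.eqb_spec m n). ring.
 assert (INR m - INR n <> 0) by (intro E; apply n0, INR_eq; lra).
 replace (INR n - INR m) with (-(INR m - INR n)) by ring. field; auto. Qed.

Lemma Bf_anti N u v : Bf N v u = - Bf N u v.
Proof. unfold Bf.
 transitivity (sum1 N (fun m => sum1 N (fun n => v m * Tent m n * u n))).
 { apply sum1_ext; intros. rewrite <- sum1_scal. apply sum1_ext; intros; ring. }
 rewrite sum1_swap. rewrite <- sum1_opp. apply sum1_ext; intros.
 rewrite <- sum1_scal, <- sum1_opp. apply sum1_ext; intros. rewrite (Tent_anti). ring. Qed.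

Lemma is_RInt_sum1 N (f : nat -> R -> R) (w : nat -> R) a b :
  (forall n, is_RInt (f n) a b (w n)) -> is_RInt (fun t => sum1 N (fun n => f n t)) a b (sum1 N w).
Proof. intros H. induction N; simpl.
 - eapply is_RInt_eqv; [|apply (is_RInt_const a b 0)]. change (scal (b-a) 0 = 0). unfold scal; simpl; unfold mult; simpl; ring.
 - apply (is_RInt_plus _ _ a b _ _ IHN (H (S N))). Qed.

Lemma is_RInt_scal' (f : R -> R) a b c l : is_RInt f a b l -> is_RInt (fun t => c * f t) a b (c * l).
Proof. intros H. apply (is_RInt_scal _ a b c l H). Qed.

Lemma is_RInt_plus' (f g : R -> R) a b l1 l2 : is_RInt f a b l1 -> is_RInt g a b l2 -> is_RInt (fun t => f t + g t) a b (l1 + l2).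
Proof. intros H1 H2. apply (is_RInt_plus _ _ a b _ _ H1 H2). Qed.

Lemma is_RInt_minus' (f g : R -> R) a b l1 l2 : is_RInt f a b l1 -> is_RInt g a b l2 -> is_RInt (fun t => f t - g t) a b (l1 - l2).
Proof. intros H1 H2. apply (is_RInt_minus _ _ a b _ _ H1 H2). Qed.

Definition Kmn (z : cvec) m n t :=
  (fst (z m) * fst (z n) + snd (z m) * snd (z n)) * cos (kk m n * t)
  + (fst (z m) * snd (z n) - snd (z m) * fst (z n)) * sin (kk m n * t).

Lemma GN_expand z N t : GN z N t = sum1 N (fun m => sum1 N (fun n => Kmn z m n t)).
Proof. unfold GN, Ere, Eim. assert (Hp: forall x : R, x^2 = x*x) by (intros; ring). rewrite !Hp, !sum1_mul. rewrite <- sum1_plus.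
 apply sum1_ext; intros m _. rewrite <- sum1_plus. apply sum1_ext; intros n _.
 unfold Kmn. replace (kk m n * t) with (th m t - th n t) by (unfold kk, th; ring).
 rewrite cos_minus, sin_minus. ring. Qed.

Lemma sum1_delta N m (f : nat -> R) : (1 <= m <= N)%nat ->
  sum1 N (fun n => f n * (if Nat.eqb m n then 1 else 0)) = f m.
Proof. induction N; intros H; [lia|]. simpl. destruct (Nat.eqb_spec m (S N)).
 - subst. rewrite sum1_zero. ring. intros n Hn. destruct (Nat.eqb_spec (S N) n); [lia|ring].
 - rewrite IHN; [ring|lia]. Qed.

Lemma I1 z N : is_RInt (GN z N) 0 1 (sum1 N (fun n => fst (z n) ^2 + snd (z n) ^2)).
Proof.
 eapply is_RInt_ext. { intros x _. symmetry. apply GN_expand. }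
 eapply is_RInt_eqv; [|apply is_RInt_sum1; intros m; apply is_RInt_sum1; intros n;
   apply is_RInt_plus'; apply is_RInt_scal'; [apply I_cos|apply I_sin]].
 symmetry. apply sum1_ext; intros m Hm. transitivity (fst (z m) * fst (z m) + snd (z m) * snd (z m)); [ring|]. rewrite <- (sum1_delta N m (fun n => fst (z m) * fst (z n) + snd (z m) * snd (z n))) by auto.
 symmetry. apply sum1_ext; intros n _. destruct (Nat.eqb_spec m n); subst; ring. Qed.

Lemma I2 z N : is_RInt (fun t => (1/2 - t) * GN z N t) 0 1 (Bf N (fun n => fst (z n)) (fun n => snd (z n)) / PI).
Proof.
 apply (is_RInt_ext (fun x => sum1 N (fun m => sum1 N (fun n =>
     (fst (z m) * fst (z n) + snd (z m) * snd (z n)) * ((1/2 - x) * cos (kk m n * x)) +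
     (fst (z m) * snd (z n) - snd (z m) * fst (z n)) * ((1/2 - x) * sin (kk m n * x)))))).
 { intros x _. rewrite GN_expand. rewrite <- sum1_scal. apply sum1_ext; intros m _.
   rewrite <- sum1_scal. apply sum1_ext; intros n _. unfold Kmn. ring. }
 eapply is_RInt_eqv; [|apply is_RInt_sum1; intros m; apply is_RInt_sum1; intros n;
   apply is_RInt_plus'; apply is_RInt_scal'; [apply I_wcos|apply I_wsin]].
 set (u := fun n => fst (z n)). set (v := fun n => snd (z n)).
 assert (Hb: Bf N u v / PI = (Bf N u v - Bf N v u) / (2*PI)).
 { rewrite Bf_anti. field. apply PI_neq0. }
 rewrite Hb. unfold Bf. symmetry. unfold Rdiv. rewrite Rmult_comm. unfold Rminus.
 rewrite <- sum1_opp, <- sum1_plus, <- sum1_scal. apply sum1_ext; intros m _.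
 rewrite <- !sum1_scal, <- sum1_opp, <- sum1_plus, <- sum1_scal. apply sum1_ext; intros n _.
 unfold u, v. field. apply PI_neq0. Qed.


Lemma cont_plus' (f g : R -> R) x : continuous f x -> continuous g x -> continuous (fun t => f t + g t) x.
Proof. intros; apply (continuous_plus f g x); auto. Qed.
Lemma cont_mult' (f g : R -> R) x : continuous f x -> continuous g x -> continuous (fun t => f t * g t) x.
Proof. intros; apply (continuous_mult f g x); auto. Qed.

Lemma cont_ext' (f g : R -> R) x : (forall t, f t = g t) -> continuous f x -> continuous g x.
Proof. intros H. apply (continuous_ext f g x H). Qed.

Lemma cont_Ere z N x : continuous (Ere z N) x.
Proof. unfold Ere. induction N; simpl.
 - apply (continuous_const (U:=R_UniformSpace) (0:R)).
 - apply (cont_plus' (fun t => sum1 N _) (fun t => _)). apply IHN. apply cont_der. unfold th. auto_derive. auto. Qed.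
Lemma cont_Eim z N x : continuous (Eim z N) x.
Proof. unfold Eim. induction N; simpl.
 - apply (continuous_const (U:=R_UniformSpace) (0:R)).
 - apply (cont_plus' (fun t => sum1 N _) (fun t => _)). apply IHN. apply cont_der. unfold th. auto_derive. auto. Qed.

Lemma cont_GN z N x : continuous (GN z N) x.
Proof. unfold GN. apply (cont_ext' (fun t => Ere z N t * Ere z N t + Eim z N t * Eim z N t)).
 intros; ring. apply cont_plus'; apply cont_mult'; auto using cont_Ere, cont_Eim. Qed.

Lemma cont_id' x : continuous (fun t : R => t) x.
Proof. apply continuous_id. Qed.
Lemma cont_const' (c : R) x : continuous (fun _ : R => c) x.
Proof. apply (continuous_const (U:=R_UniformSpace) c). Qed.

Lemma RIc (f : R -> R) a b : (forall x, continuous f x) -> is_RInt f a b (RInt f a b).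
Proof. intros H. apply (RInt_correct (V:=R_CompleteNormedModule)). apply (ex_RInt_continuous (V:=R_CompleteNormedModule)). intros; apply H. Qed.

Lemma RInt_uniq' (f : R -> R) a b l : is_RInt f a b l -> RInt f a b = l.
Proof. intros H. apply (is_RInt_unique (V:=R_CompleteNormedModule)). exact H. Qed.

Lemma Chasles' (f : R -> R) a b c l1 l2 : is_RInt f a b l1 -> is_RInt f b c l2 -> is_RInt f a c (l1 + l2).
Proof. intros H1 H2. apply (is_RInt_Chasles f a b c l1 l2 H1 H2). Qed.

Lemma is_RInt_const' (c : R) a b : is_RInt (fun _ => c) a b ((b-a)*c).
Proof. apply (is_RInt_const a b c). Qed.

Definition SN (z : cvec) N := sum1 N (fun n => fst (z n) ^2 + snd (z n) ^2).

Lemma GN_nonneg z N t : 0 <= GN z N t.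
Proof. unfold GN. pose proof (pow2_ge_0 (Ere z N t)). pose proof (pow2_ge_0 (Eim z N t)). lra. Qed.

Lemma SN_nonneg z N : 0 <= SN z N.
Proof. apply sum1_nonneg. intros. pose proof (pow2_ge_0 (fst (z n))). pose proof (pow2_ge_0 (snd (z n))). lra. Qed.

Lemma GN_bound z N t : GN z N t <= INR N * SN z N.
Proof. unfold GN, Ere, Eim, SN.
 pose proof (CS1 N (fun n => fst (z n) * cos (th n t) - snd (z n) * sin (th n t))) as H1.
 pose proof (CS1 N (fun n => fst (z n) * sin (th n t) + snd (z n) * cos (th n t))) as H2.
 assert (E: sum1 N (fun n => (fst (z n) * cos (th n t) - snd (z n) * sin (th n t)) ^ 2) +
            sum1 N (fun n => (fst (z n) * sin (th n t) + snd (z n) * cos (th n t)) ^ 2) =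
            sum1 N (fun n => fst (z n) ^2 + snd (z n) ^2)).
 { rewrite <- sum1_plus. apply sum1_ext; intros n _. pose proof (sin2_cos2 (th n t)). unfold Rsqr in H.
   set (s := sin (th n t)) in *. set (c := cos (th n t)) in *.
   transitivity ((fst (z n) ^2 + snd (z n) ^2) * (s*s + c*c)); [ring|]. rewrite H; ring. }
 rewrite <- E. lra. Qed.

Lemma upper_form z N : (1 <= N)%nat ->
  Bf N (fun n => fst (z n)) (fun n => snd (z n)) / PI <=
  (1/2 - 1/(4*INR N) + (1/(4*INR N))^2 * INR N) * SN z N.
Proof. intros HN.
 assert (HNr: 1 <= INR N) by (apply (le_INR 1); auto).
 set (d := 1/(4*INR N)).
 assert (Hd: 0 < d <= 1/4) by (unfold d; split; [apply Rdiv_lt_0_compat; lra|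
   apply Rmult_le_reg_l with (4*INR N); [lra|]; field_simplify; lra]).
 set (G := GN z N). set (S := SN z N).
 assert (HG0: forall t, 0 <= G t) by (intros; apply GN_nonneg).
 assert (HGb: forall t, G t <= INR N * S) by (intros; apply GN_bound).
 assert (HS0: 0 <= S) by apply SN_nonneg.
 assert (cG: forall x, continuous G x) by (intros; apply cont_GN).
 assert (cW: forall x, continuous (fun t => (1/2 - t) * G t) x).
 { intros x. apply cont_mult'; auto. apply (cont_ext' (fun t => 1/2 + (-1) * t)). intros; ring.
   apply cont_plus'. apply cont_const'. apply cont_mult'. apply cont_const'. apply cont_id'. }
 pose proof (I2 z N) as HI2. fold G in HI2.
 pose proof (I1 z N) as HI1. fold (SN z N) in HI1. fold S in HI1.
 pose proof (RIc _ 0 d cW) as W1. pose proof (RIc _ d 1 cW) as W2.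
 pose proof (RIc _ 0 d cG) as G1. pose proof (RIc _ d 1 cG) as G2.
 pose proof (Chasles' _ _ _ _ _ _ W1 W2) as W12.
 pose proof (Chasles' _ _ _ _ _ _ G1 G2) as G12.
 apply RInt_uniq' in W12. apply RInt_uniq' in G12.
 apply RInt_uniq' in HI1. apply RInt_uniq' in HI2.
 pose proof (eq_trans (eq_sym W12) HI2) as E2. pose proof (eq_trans (eq_sym G12) HI1) as E1. clear W12 G12 HI1 HI2.
 set (w1 := RInt (fun t => (1/2 - t) * G t) 0 d) in *.
 set (w2 := RInt (fun t => (1/2 - t) * G t) d 1) in *.
 set (g1 := RInt G 0 d) in *. set (g2 := RInt G d 1) in *.
 assert (L1: w1 <= (1/2 - d) * g1 + (d - 0) * (d * (INR N * S))).
 { apply (is_RInt_le (fun t => (1/2 - t) * G t) (fun t => (1/2 - d) * G t + d * (INR N * S)) 0 d); [lra|exact W1| |].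
   - apply is_RInt_plus'. apply is_RInt_scal'. exact G1. apply is_RInt_const'.
   - intros x Hx. pose proof (HG0 x). pose proof (HGb x). nra. }
 assert (L2: w2 <= (1/2 - d) * g2).
 { apply (is_RInt_le (fun t => (1/2 - t) * G t) (fun t => (1/2 - d) * G t) d 1); [lra|exact W2| |].
   - apply is_RInt_scal'. exact G2.
   - intros x Hx. pose proof (HG0 x). nra. }
 assert (Hfin: w1 + w2 <= (1/2 - d) * (g1 + g2) + d * d * INR N * S) by nra.
 assert (E2' : w1 + w2 = Bf N (fun n => fst (z n)) (fun n => snd (z n)) / PI) by exact E2.
 assert (E1' : g1 + g2 = S) by exact E1. rewrite E2', E1' in Hfin. replace ((1/(4*INR N))^2) with (d*d) by (unfold d; ring). nra. Qed.

Definition Kup N := PI * (1 - 3 / (8 * INR N)).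

Lemma Kup_pos N : (1 <= N)%nat -> 0 < Kup N.
Proof. intros H. assert (1 <= INR N) by (apply (le_INR 1); auto). unfold Kup.
 apply Rmult_lt_0_compat. apply PI_RGT_0.
 assert (3 / (8 * INR N) <= 3/8). { apply Rmult_le_reg_l with (8*INR N). lra. field_simplify; lra. }
 lra. Qed.

Lemma real_bound N (x : nat -> R) : (1 <= N)%nat ->
  sum1 N (fun m => (sum1 N (fun n => Tent m n * x n))^2) <= Kup N ^2 * sum1 N (fun m => x m ^2).
Proof. intros HN. set (w := fun m => sum1 N (fun n => Tent m n * x n)).
 assert (HNr: 1 <= INR N) by (apply (le_INR 1); auto).
 pose proof (Kup_pos N HN) as HK.
 set (K := Kup N) in *.
 set (W := sum1 N (fun m => w m ^2)). set (X := sum1 N (fun m => x m ^2)).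
 set (lam := / K).
 pose proof (upper_form (fun n => (lam * w n, x n)) N HN) as H. cbn [fst snd] in H.
 assert (HB: Bf N (fun n => lam * w n) (fun n => x n) = lam * W).
 { unfold Bf, W. rewrite <- sum1_scal. apply sum1_ext; intros. unfold w. simpl. ring. }
 assert (HS: SN (fun n => (lam * w n, x n)) N = lam^2 * W + X).
 { unfold SN, W, X. simpl. rewrite <- sum1_scal, <- sum1_plus. apply sum1_ext; intros; ring. }
 rewrite HB, HS in H.
 assert (Hc: (1/2 - 1/(4*INR N) + (1/(4*INR N))^2 * INR N) = K / (2*PI)).
 { unfold K, Kup. field. split. lra. apply PI_neq0. }
 rewrite Hc in H. pose proof PI_RGT_0.
 assert (H2: lam * W <= K/2 * (lam^2 * W + X)).
 { apply Rmult_le_reg_r with (/PI). apply Rinv_0_lt_compat; lra.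
   replace (K / 2 * (lam ^ 2 * W + X) * / PI) with (K / (2 * PI) * (lam ^ 2 * W + X)) by (field; lra). exact H. }
 unfold lam in H2. replace (K/2 * ((/K) ^2 * W + X)) with (/K * W / 2 + K/2 * X) in H2 by (field; lra).
 assert (H3: /K * W <= K * X) by lra.
 apply Rmult_le_reg_l with (/K). apply Rinv_0_lt_compat; lra.
 replace (/K * (K^2 * X)) with (K * X) by (field; lra). exact H3. Qed.

Lemma norm_upper N z : (1 <= N)%nat -> cnorm N z <= 1 -> cnorm N (Tapply N z) <= Kup N.
Proof. intros HN Hz. pose proof (Kup_pos N HN) as HK.
 unfold cnorm in *. unfold Tapply. cbn [fst snd].
 set (A := sum1 N (fun n => fst (z n) ^2 + snd (z n) ^2)) in *.
 assert (HA0 : 0 <= A) by (apply (SN_nonneg z N)).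
 assert (HA : A <= 1).
 { rewrite <- (sqrt_sqrt A) by auto. pose proof (sqrt_pos A). nra. }
 pose proof (real_bound N (fun n => fst (z n)) HN) as H1.
 pose proof (real_bound N (fun n => snd (z n)) HN) as H2.
 rewrite <- (sqrt_pow2 (Kup N)) by lra. apply sqrt_le_1_alt.
 rewrite sum1_plus. replace A with (sum1 N (fun m => fst (z m) ^2) + sum1 N (fun m => snd (z m)^2)) in HA
   by (unfold A; rewrite sum1_plus; auto).
 pose proof (pow2_ge_0 (Kup N)). nra. Qed.

Definition cadd (a b : R*R) : R*R := (fst a + fst b, snd a + snd b).
Definition cmul (a b : R*R) : R*R := (fst a * fst b - snd a * snd b, fst a * snd b + snd a * fst b).
Definition cn2 (a : R*R) := fst a ^2 + snd a ^2.
Definition ex (n : nat) (t : R) : R*R := (cos (th n t), sin (th n t)).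
Definition Ec (z : cvec) N t : R*R := (Ere z N t, Eim z N t).
Fixpoint cpow (q : R*R) (m : nat) : R*R := match m with O => (1,0) | S k => cmul (cpow q k) q end.

Lemma pair_ext (p q : R*R) : fst p = fst q -> snd p = snd q -> p = q.
Proof. destruct p, q; simpl; intros; subst; auto. Qed.

Lemma cn2_mul a b : cn2 (cmul a b) = cn2 a * cn2 b.
Proof. unfold cn2, cmul; simpl. ring. Qed.

Lemma cn2_pow q m : cn2 (cpow q m) = cn2 q ^ m.
Proof. induction m; simpl. unfold cn2; simpl; ring. rewrite cn2_mul, IHm. ring. Qed.

Lemma cn2_ex n t : cn2 (ex n t) = 1.
Proof. unfold cn2, ex; simpl. pose proof (sin2_cos2 (th n t)). unfold Rsqr in H. lra. Qed.

Lemma GN_Ec z N t : GN z N t = cn2 (Ec z N t).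
Proof. reflexivity. Qed.

Lemma th_add a b t : th (a + b) t = th a t + th b t.
Proof. unfold th. rewrite plus_INR. ring. Qed.

Lemma sum1_scal_r N c f : sum1 N (fun n => f n * c) = sum1 N f * c.
Proof. induction N; simpl; [ring|rewrite IHN; ring]. Qed.

Lemma sum1_minus N f g : sum1 N (fun n => f n - g n) = sum1 N f - sum1 N g.
Proof. induction N; simpl; [ring|rewrite IHN; ring]. Qed.

Lemma Ec_shift z d c j t :
  cmul (Ec z d t) (cmul c (ex j t)) =
  Ec (fun n => if Nat.leb n j then (0,0) else cmul (z (n - j)%nat) c) (j + d) t.
Proof. unfold Ec, Ere, Eim, cmul, ex. apply pair_ext; simpl; rewrite sum1_split;
 (rewrite (sum1_zero j); [|intros n Hn; replace (Nat.leb n j) with true by (symmetry; apply Nat.leb_le; lia); simpl; ring]);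
 rewrite Rplus_0_l; rewrite <- !sum1_scal_r, <- ?sum1_minus, <- ?sum1_plus; apply sum1_ext; intros n Hn;
 (replace (Nat.leb (j + n) j) with false by (symmetry; apply Nat.leb_gt; lia)); simpl;
 replace (j + n - j)%nat with n by lia; rewrite th_add, cos_plus, sin_plus; ring. Qed.

Lemma Ec_pad z d k t : Ec z d t = Ec (fun n => if Nat.leb n d then z n else (0,0)) (d + k) t.
Proof. unfold Ec, Ere, Eim. apply pair_ext; simpl; rewrite sum1_split;
 (rewrite (sum1_zero k); [|intros n Hn; replace (Nat.leb (d+n) d) with false by (symmetry; apply Nat.leb_gt; lia); simpl; ring]);
 rewrite Rplus_0_r; apply sum1_ext; intros n Hn; replace (Nat.leb n d) with true by (symmetry; apply Nat.leb_le; lia); auto. Qed.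

Lemma Ec_add z1 z2 D t : cadd (Ec z1 D t) (Ec z2 D t) = Ec (fun n => cadd (z1 n) (z2 n)) D t.
Proof. unfold Ec, Ere, Eim, cadd. apply pair_ext; simpl; rewrite <- sum1_plus; apply sum1_ext; intros; ring. Qed.

Lemma Ec_zero D t : Ec (fun _ => (0,0)) D t = (0,0).
Proof. unfold Ec, Ere, Eim. apply pair_ext; simpl; apply sum1_zero; intros; ring. Qed.

Lemma cmul_cadd_r a b c : cmul a (cadd b c) = cadd (cmul a b) (cmul a c).
Proof. unfold cmul, cadd; apply pair_ext; simpl; ring. Qed.

Lemma cmul_assoc a b c : cmul (cmul a b) c = cmul a (cmul b c).
Proof. unfold cmul; apply pair_ext; simpl; ring. Qed.

Lemma Ec_S w L t : Ec w (S L) t = cadd (Ec w L t) (cmul (w (S L)) (ex (S L) t)).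
Proof. unfold Ec, Ere, Eim, cadd, cmul, ex. apply pair_ext; simpl; ring. Qed.

Lemma Ec_prod L : forall z w d, exists z', forall t, cmul (Ec z d t) (Ec w L t) = Ec z' (d + L) t.
Proof. induction L; intros z w d.
 - exists (fun _ => (0,0)). intros t. rewrite Ec_zero. unfold Ec, Ere, Eim, cmul. apply pair_ext; simpl; ring.
 - destruct (IHL z w d) as [z1 H1].
   set (z2 := fun n => if Nat.leb n (S L) then (0,0) else cmul (z (n - S L)%nat) (w (S L))).
   exists (fun n => cadd ((fun n => if Nat.leb n (d + L) then z1 n else (0,0)) n) (z2 n)).
   intros t. rewrite Ec_S, cmul_cadd_r, H1, Ec_shift.
   rewrite (Ec_pad z1 (d + L) 1). replace (d + L + 1)%nat with (d + S L)%nat by lia.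
   replace (S L + d)%nat with (d + S L)%nat by lia. apply Ec_add. Qed.

Lemma Ec_power L w m : exists z, forall t, Ec z (1 + m * L) t = cmul (ex 1 t) (cpow (Ec w L t) m).
Proof. induction m.
 - exists (fun n => if Nat.eqb n 1 then (1,0) else (0,0)). intros t. simpl.
   unfold Ec, Ere, Eim, cmul, ex. apply pair_ext; simpl; ring.
 - destruct IHm as [z1 H1]. destruct (Ec_prod L z1 w (1 + m * L)) as [z2 H2].
   exists z2. intros t. replace (1 + S m * L)%nat with (1 + m * L + L)%nat by lia.
   rewrite <- H2, H1. simpl. rewrite cmul_assoc. reflexivity. Qed.

Definition Qs L s : R*R := (sum1 L (fun j => cos (th j s)), sum1 L (fun j => sin (th j s))).

Lemma Ec_Qs L t0 t : Ec (fun j => ex j (-t0)) L t = Qs L (t - t0).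
Proof. unfold Ec, Ere, Eim, Qs, ex. apply pair_ext; simpl; apply sum1_ext; intros j _;
 replace (th j (t - t0)) with (th j t + th j (-t0)) by (unfold th; ring);
 rewrite ?cos_plus, ?sin_plus; ring. Qed.

Lemma tele L (f : nat -> R) : sum1 L (fun j => f (S j) - f j) = f (S L) - f 1%nat.
Proof. induction L; simpl. ring. rewrite IHL. ring. Qed.

Lemma cos_approx1 a : cos_approx a 1 = 1 - a^2/2.
Proof. unfold cos_approx, cos_term. simpl. field. Qed.
Lemma sin_approx1 a : sin_approx a 1 = a - a^3/6.
Proof. unfold sin_approx, sin_term. simpl. field. Qed.

Lemma Q_upper L s : cn2 (Qs L s) * sin (PI * s) ^2 <= 1.
Proof.
 set (C := cos (th 1 s)). set (Sn := sin (th 1 s)).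
 assert (HD: cmul (Qs L s) (C - 1, Sn) = (cos (th (S L) s) - cos (th 1 s), sin (th (S L) s) - sin (th 1 s))).
 { unfold cmul, Qs. apply pair_ext; simpl.
   - rewrite <- (tele L (fun j => cos (th j s))). rewrite <- !sum1_scal_r, <- sum1_minus. apply sum1_ext; intros j _.
     replace (th (S j) s) with (th j s + th 1 s) by (rewrite <- th_add; f_equal; lia). rewrite cos_plus. unfold C, Sn. ring.
   - rewrite <- (tele L (fun j => sin (th j s))). rewrite <- !sum1_scal_r, <- sum1_plus. apply sum1_ext; intros j _.
     replace (th (S j) s) with (th j s + th 1 s) by (rewrite <- th_add; f_equal; lia). rewrite sin_plus. unfold C, Sn. ring. }
 assert (H1: cn2 (C - 1, Sn) = 4 * sin (PI * s) ^2).
 { unfold cn2; simpl. unfold C, Sn, th. simpl INR.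
   replace (2 * PI * 1 * s) with (2 * (PI * s)) by ring.
   pose proof (sin2_cos2 (2 * (PI * s))) as Hq. unfold Rsqr in Hq. rewrite cos_2a_sin in *.
   set (x := sin (PI * s)) in *. set (y := sin (2 * (PI * s))) in *. nra. }
 assert (H2: cn2 (cmul (Qs L s) (C - 1, Sn)) <= 4).
 { rewrite HD. unfold cn2; simpl.
   pose proof (sin2_cos2 (th (S L) s)). pose proof (sin2_cos2 (th 1 s)). unfold Rsqr in *.
   pose proof (pow2_ge_0 (cos (th (S L) s) + cos (th 1 s))). pose proof (pow2_ge_0 (sin (th (S L) s) + sin (th 1 s))). nra. }
 rewrite cn2_mul, H1 in H2. lra. Qed.

Lemma Q_lower L s : (1 <= L)%nat -> Rabs s <= 1 / (8 * INR L) -> INR L ^2 / 4 <= cn2 (Qs L s).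
Proof. intros HL Hs. pose proof PI_4. pose proof PI_RGT_0.
 assert (HLr: 1 <= INR L) by (apply (le_INR 1); auto).
 assert (Hf: INR L / 2 <= fst (Qs L s)).
 { unfold Qs; simpl. replace (INR L / 2) with (sum1 L (fun _ => 1/2)).
   2:{ clear. induction L; simpl. field. rewrite IHL. destruct L; simpl; field. }
   apply sum1_le. intros j Hj. assert (Hj': 1 <= INR j <= INR L) by (split; [apply (le_INR 1)|apply le_INR]; lia).
   set (a := th j s). assert (Ha: Rabs a <= 1).
   { unfold a, th. rewrite !Rabs_mult. rewrite (Rabs_right 2) by lra. rewrite (Rabs_right PI) by lra.
     rewrite (Rabs_right (INR j)) by lra. apply Rle_trans with (8 * INR L * Rabs s).
     - apply Rmult_le_compat_r; [apply Rabs_pos|nra].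
     - apply Rle_trans with (8 * INR L * (1 / (8 * INR L))). apply Rmult_le_compat_l; lra. right; field; lra. }
   assert (-1 <= a <= 1) by (unfold Rabs in Ha; destruct (Rcase_abs a); lra).
   pose proof PI2_3_2. destruct (cos_bound a 0) as [Hc _]; [lra|lra|]. simpl in Hc. rewrite cos_approx1 in Hc. nra. }
 unfold cn2. pose proof (pow2_ge_0 (snd (Qs L s))). assert (0 <= INR L / 2) by lra. nra. Qed.

Lemma sin_low (Lr : R) : 8 <= Lr -> 3 / Lr <= sin (PI * (3 / Lr)).
Proof. intros HL. pose proof PI_4. pose proof PI2_3_2.
 set (x := PI * (3 / Lr)).
 assert (Hx: 9 / Lr <= x <= 12 / Lr).
 { unfold x. split; unfold Rdiv; rewrite <- Rmult_assoc; apply Rmult_le_compat_r;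
   try (left; apply Rinv_0_lt_compat; lra); lra. }
 assert (H12 : 12 / Lr <= 3/2) by (apply Rmult_le_reg_l with Lr; [lra|]; field_simplify; lra).
 assert (H9 : 0 < 9 / Lr) by (apply Rdiv_lt_0_compat; lra).
 destruct (sin_bound x 0) as [Hs _]; [lra|lra|]. simpl in Hs. rewrite sin_approx1 in Hs.
 assert (x - x^3/6 >= 5/8 * x) by nra.
 assert (5/8 * (9 / Lr) >= 3 / Lr) by (unfold Rdiv; nra).
 lra. Qed.

Lemma sin_mono t0 s : 0 < t0 <= 1/2 -> t0 <= s <= 1 - t0 -> sin (PI * t0) <= sin (PI * s).
Proof. intros Ht Hs. pose proof PI_RGT_0.
 destruct (Rle_or_lt s (1/2)).
 - apply sin_incr_1; nra.
 - rewrite <- (sin_PI_x (PI * s)). apply sin_incr_1; nra. Qed.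

Lemma Q_far L t0 s : (8 <= L)%nat -> t0 = 3 / INR L -> t0 <= s <= 1 - t0 -> cn2 (Qs L s) <= INR L ^2 / 9.
Proof. intros HL Ht Hs. assert (HLr: 8 <= INR L) by (replace 8 with (INR 8) by (simpl; ring); apply le_INR; auto).
 pose proof (sin_low (INR L) HLr) as H1. rewrite <- Ht in H1.
 assert (Ht2: 0 < t0 <= 1/2) by (subst; split; [apply Rdiv_lt_0_compat; lra|apply Rmult_le_reg_l with (INR L); [lra|]; field_simplify; lra]).
 pose proof (sin_mono t0 s Ht2 Hs) as H2.
 pose proof (Q_upper L s) as H3.
 assert (H4: 3 / INR L <= sin (PI * s)) by lra.
 assert (H5: 0 < 3 / INR L) by (apply Rdiv_lt_0_compat; lra).
 assert (H6: (3 / INR L)^2 <= sin (PI * s) ^2) by (apply pow_incr; lra).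
 assert (H7: 0 <= cn2 (Qs L s)) by (unfold cn2; pose proof (pow2_ge_0 (fst (Qs L s))); pose proof (pow2_ge_0 (snd (Qs L s))); lra).
 assert (H8: cn2 (Qs L s) * (3 / INR L)^2 <= 1) by nra.
 replace ((3 / INR L)^2) with (9 / INR L ^2) in H8 by (field; lra).
 apply Rmult_le_reg_r with (9 / INR L ^2). apply Rdiv_lt_0_compat; nra.
 replace (INR L ^ 2 / 9 * (9 / INR L ^ 2)) with 1 by (field; lra). exact H8. Qed.

Lemma is_RInt_zero' a b : is_RInt (fun _ => 0) a b 0.
Proof. pose proof (is_RInt_const' 0 a b). replace ((b - a) * 0) with 0 in H by ring. exact H. Qed.

Lemma lower_integrals (Gf : R -> R) S A t0 h c1 c2 :
  (forall x, continuous Gf x) -> (forall x, 0 <= Gf x) ->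
  is_RInt Gf 0 1 S -> is_RInt (fun t => t * Gf t) 0 1 A ->
  0 < h <= t0 -> 2 * t0 <= 1 -> 0 <= c2 ->
  (forall t, t0 - h <= t <= t0 + h -> c1 <= Gf t) ->
  (forall t, 2 * t0 <= t <= 1 -> Gf t <= c2) ->
  2 * h * c1 <= S /\ A <= 2 * t0 * S + c2.
Proof. intros cG HG0 HS HA Hh Ht Hc2 Hc1 Hfar.
 assert (cW: forall x : R, continuous (fun t : R => t * Gf t) x) by (intros; apply cont_mult'; auto; apply cont_id').
 split.
 - pose proof (RIc _ 0 (t0 - h) cG) as I1. pose proof (RIc _ (t0 - h) (t0 + h) cG) as I2.
   pose proof (RIc _ (t0 + h) 1 cG) as I3.
   pose proof (RInt_uniq' _ _ _ _ (Chasles' _ _ _ _ _ _ (Chasles' _ _ _ _ _ _ I1 I2) I3)) as E.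
   apply RInt_uniq' in HS. rewrite HS in E.
   assert (0 <= RInt Gf 0 (t0 - h)).
   { apply (is_RInt_le (fun _ => 0) Gf 0 (t0 - h)); [lra| |exact I1|intros; auto].
     apply is_RInt_zero'. }
   assert (0 <= RInt Gf (t0 + h) 1).
   { apply (is_RInt_le (fun _ => 0) Gf (t0+h) 1); [lra| |exact I3|intros; auto].
     apply is_RInt_zero'. }
   assert ((t0 + h - (t0 - h)) * c1 <= RInt Gf (t0 - h) (t0 + h)).
   { apply (is_RInt_le (fun _ => c1) Gf (t0 - h) (t0 + h)); [lra|apply is_RInt_const'|exact I2|].
     intros; apply Hc1; lra. }
   lra.
 - pose proof (RIc _ 0 (2*t0) cG) as I1. pose proof (RIc _ (2*t0) 1 cG) as I2.
   pose proof (RIc _ 0 (2*t0) cW) as J1. pose proof (RIc _ (2*t0) 1 cW) as J2.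
   pose proof (RInt_uniq' _ _ _ _ (Chasles' _ _ _ _ _ _ I1 I2)) as E1.
   pose proof (RInt_uniq' _ _ _ _ (Chasles' _ _ _ _ _ _ J1 J2)) as E2.
   apply RInt_uniq' in HS. apply RInt_uniq' in HA. pose proof (eq_trans (eq_sym E1) HS) as E1'. pose proof (eq_trans (eq_sym E2) HA) as E2'. clear E1 E2.
   assert (0 <= RInt Gf (2*t0) 1).
   { apply (is_RInt_le (fun _ => 0) Gf (2*t0) 1); [lra| |exact I2|intros; auto].
     apply is_RInt_zero'. }
   assert (RInt (fun t => t * Gf t) 0 (2*t0) <= 2 * t0 * RInt Gf 0 (2*t0)).
   { apply (is_RInt_le (fun t => t * Gf t) (fun t => 2 * t0 * Gf t) 0 (2*t0)); [lra|exact J1|apply is_RInt_scal'; exact I1|].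
     intros x Hx. pose proof (HG0 x). nra. }
   assert (RInt (fun t => t * Gf t) (2*t0) 1 <= (1 - 2*t0) * c2).
   { apply (is_RInt_le (fun t => t * Gf t) (fun _ => c2) (2*t0) 1); [lra|exact J2|apply is_RInt_const'|].
     intros x Hx. pose proof (HG0 x). assert (Gf x <= c2) by (apply Hfar; lra). nra. }
   assert (0 <= t0) by lra.
   assert (2*t0*RInt Gf 0 (2*t0) <= 2*t0*S) by (apply Rmult_le_compat_l; lra).
   nra. Qed.

Lemma is_RInt_ext' (f g : R -> R) a b l : (forall x, f x = g x) -> is_RInt f a b l -> is_RInt g a b l.
Proof. intros H. apply is_RInt_ext. intros; apply H. Qed.

Definition Tv N (x : nat -> R) m := sum1 N (fun n => Tent m n * x n).

Lemma two_B N u v : Bf N u v - Bf N v u = sum1 N (fun m => u m * Tv N v m + v m * (- Tv N u m)).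
Proof. unfold Bf, Tv. rewrite <- sum1_minus. apply sum1_ext; intros; ring. Qed.

Lemma scaled_norm N (z : cvec) (r : R) : 0 < r ->
  cnorm N (fun n => (fst (z n) / r, snd (z n) / r)) = sqrt (sum1 N (fun n => fst (z n) ^2 + snd (z n) ^2) / r^2).
Proof. intros Hr. unfold cnorm. f_equal.
 transitivity (sum1 N (fun n => / r^2 * (fst (z n) ^2 + snd (z n) ^2))).
 apply sum1_ext; intros; simpl. field. lra. rewrite sum1_scal. field. lra. Qed.

Lemma scaled_T N (z : cvec) (r : R) : 0 < r ->
  cnorm N (Tapply N (fun n => (fst (z n) / r, snd (z n) / r))) =
  sqrt (sum1 N (fun m => Tv N (fun n => fst (z n)) m ^2 + Tv N (fun n => snd (z n)) m ^2) / r^2).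
Proof. intros Hr. unfold cnorm, Tapply, Tv. f_equal.
 transitivity (sum1 N (fun n => / r^2 * (sum1 N (fun n0 => Tent n n0 * fst (z n0)) ^ 2 + sum1 N (fun n0 => Tent n n0 * snd (z n0)) ^ 2))).
 2:{ rewrite sum1_scal. field. lra. }
 apply sum1_ext; intros; simpl.
 replace (sum1 N (fun n0 => Tent n n0 * (fst (z n0) / r))) with (sum1 N (fun n0 => Tent n n0 * fst (z n0)) / r)
   by (unfold Rdiv; rewrite <- sum1_scal_r; apply sum1_ext; intros; ring).
 replace (sum1 N (fun n0 => Tent n n0 * (snd (z n0) / r))) with (sum1 N (fun n0 => Tent n n0 * snd (z n0)) / r)
   by (unfold Rdiv; rewrite <- sum1_scal_r; apply sum1_ext; intros; ring).
 field. lra. Qed.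

Lemma lower_norm N L m : (8 <= L)%nat -> (1 + m * L <= N)%nat ->
  exists z, cnorm N z <= 1 /\ PI * (1 - 2 * (6 / INR L + 4 * INR L * (4/9)^m)) <= cnorm N (Tapply N z).
Proof. intros HL HN.
 assert (HLr: 8 <= INR L) by (replace 8 with (INR 8) by (simpl; ring); apply le_INR; auto).
 set (t0 := 3 / INR L).
 destruct (Ec_power L (fun j => ex j (-t0)) m) as [z1 Hz1].
 set (d := (1 + m * L)%nat) in *.
 set (z := fun n => if Nat.leb n d then z1 n else (0,0)).
 assert (HG: forall t, GN z N t = cn2 (Qs L (t - t0)) ^ m).
 { intros t. rewrite GN_Ec. replace N with (d + (N - d))%nat by lia. unfold z. rewrite <- Ec_pad.
   rewrite Hz1, cn2_mul, cn2_ex, cn2_pow, Ec_Qs. ring. }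
 set (Gf := GN z N).
 set (S := SN z N). set (B := Bf N (fun n => fst (z n)) (fun n => snd (z n))).
 pose proof (I1 z N) as HI1. fold (SN z N) in HI1. fold S in HI1.
 pose proof (I2 z N) as HI2. fold B in HI2.
 assert (HA: is_RInt (fun t => t * Gf t) 0 1 (1/2 * S - B / PI)).
 { eapply is_RInt_ext'; [|apply is_RInt_minus'; [apply is_RInt_scal'; exact HI1|exact HI2]].
   intros x. unfold Gf. simpl. ring. }
 set (h := 1 / (8 * INR L)). set (c1 := (INR L ^2 / 4) ^ m). set (c2 := (INR L ^2 / 9) ^ m).
 assert (Hc1p: 0 < c1) by (apply pow_lt; nra).
 assert (Hc2p: 0 <= c2) by (left; apply pow_lt; nra).
 assert (Ht0: 0 < t0) by (apply Rdiv_lt_0_compat; lra).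
 destruct (lower_integrals Gf S (1/2 * S - B / PI) t0 h c1 c2) as [LS LA].
 - intros; apply cont_GN.
 - intros; apply GN_nonneg.
 - exact HI1.
 - exact HA.
 - unfold h, t0. split. apply Rdiv_lt_0_compat; lra. apply Rmult_le_reg_l with (8 * INR L); [lra|]. field_simplify; lra.
 - unfold t0. apply Rmult_le_reg_l with (INR L); [lra|]. field_simplify; lra.
 - exact Hc2p.
 - intros t Ht. unfold Gf. rewrite HG. unfold c1. apply pow_incr. split. nra.
   apply Q_lower. lia. unfold Rabs. destruct (Rcase_abs (t - t0)); unfold h in *; lra.
 - intros t Ht. unfold Gf. rewrite HG. unfold c2. apply pow_incr. split.
   unfold cn2. pose proof (pow2_ge_0 (fst (Qs L (t - t0)))). pose proof (pow2_ge_0 (snd (Qs L (t - t0)))). lra.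
   apply (Q_far L t0). lia. reflexivity. lra.
 - set (eps := 6 / INR L + 4 * INR L * (4/9)^m).
   assert (Hc12: c2 = c1 * (4/9)^m) by (unfold c1, c2; rewrite <- Rpow_mult_distr; f_equal; field).
   assert (HSpos: 0 < S) by (assert (0 < 2 * h * c1) by (apply Rmult_lt_0_compat; [unfold h; apply Rmult_lt_0_compat; [lra| apply Rdiv_lt_0_compat; lra]|lra]); lra).
   assert (Hc1S: c1 <= 4 * INR L * S).
   { replace (2 * h * c1) with (c1 / (4 * INR L)) in LS by (unfold h; field; lra).
     apply Rmult_le_reg_r with (/ (4 * INR L)). apply Rinv_0_lt_compat; lra.
     replace (4 * INR L * S * / (4 * INR L)) with S by (field; lra). exact LS. }
   assert (H49: 0 < (4/9)^m) by (apply pow_lt; lra).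
   assert (HAe: 1/2 * S - B / PI <= eps * S).
   { unfold eps. assert (c2 <= 4 * INR L * (4/9)^m * S) by (rewrite Hc12; nra).
     replace (2 * t0) with (6 / INR L) in LA by (unfold t0; field; lra). nra. }
   pose proof PI_RGT_0.
   assert (HB: PI * (1/2 - eps) * S <= B).
   { assert (B / PI >= (1/2 - eps) * S) by lra.
     apply Rmult_ge_compat_l with (r := PI) in H0; [|lra].
     replace (PI * (B / PI)) with B in H0 by (field; lra). lra. }
   set (u := fun n => fst (z n)) in *. set (v := fun n => snd (z n)) in *.
   set (TT := sum1 N (fun m => Tv N u m ^2 + Tv N v m ^2)).
   assert (HCS: (2 * B)^2 <= S * TT).
   { replace (2 * B) with (Bf N u v - Bf N v u) by (rewrite (Bf_anti N u v); unfold B; ring).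
     rewrite two_B. pose proof (CS2 N u v (Tv N v) (fun m => - Tv N u m)) as Hc.
     replace (sum1 N (fun n => u n ^2 + v n ^2)) with S in Hc by reflexivity.
     replace (sum1 N (fun n => Tv N v n ^2 + (- Tv N u n) ^2)) with TT in Hc
       by (unfold TT; apply sum1_ext; intros; ring). exact Hc. }
   set (r := sqrt S).
   assert (Hr: 0 < r) by (apply sqrt_lt_R0; lra).
   assert (Hr2: r^2 = S) by (unfold r; rewrite <- Rsqr_pow2; apply Rsqr_sqrt; lra).
   exists (fun n => (fst (z n) / r, snd (z n) / r)). split.
   + rewrite scaled_norm by auto. fold (SN z N). fold S. rewrite Hr2. rewrite Rdiv_diag by lra. rewrite sqrt_1. lra.
   + rewrite scaled_T by auto. fold u v. fold TT. rewrite Hr2.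
     destruct (Rle_or_lt (PI * (1 - 2 * eps)) 0) as [Hn|Hp].
     * pose proof (sqrt_pos (TT / S)). lra.
     * rewrite <- (sqrt_pow2 (PI * (1 - 2 * eps))) by lra. apply sqrt_le_1_alt.
       apply Rmult_le_reg_r with S; [lra|]. replace (TT / S * S) with TT by (field; lra).
       assert (HB2: PI * (1 - 2*eps) * S <= 2 * B) by lra.
       assert (0 <= PI * (1 - 2*eps) * S) by nra.
       assert ((PI * (1 - 2*eps) * S)^2 <= (2*B)^2) by (apply pow_incr; lra).
       assert ((PI * (1 - 2*eps))^2 * S * S <= TT * S) by nra.
       apply Rmult_le_reg_r with S; [lra|]. nra.
Qed.

Lemma pow2_big p : (9 <= p)%nat -> (16 * p + 17 <= 2 ^ p)%nat.
Proof. intros H. induction H. simpl. lia. rewrite Nat.pow_succ_r'. lia. Qed.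

Lemma ln_mono x y : 0 < x -> x <= y -> ln x <= ln y.
Proof. intros Hx Hxy. destruct (Req_dec x y). subst; lra. left. apply ln_increasing; lra. Qed.

Lemma INR_pos_le k N : (k <= N)%nat -> INR k <= INR N.
Proof. apply le_INR. Qed.

Lemma cnorm_nonneg N z : 0 <= cnorm N z.
Proof. unfold cnorm. apply sqrt_pos. Qed.

Lemma zero_in N : T_image_norms N 0.
Proof. exists (fun _ => (0,0)). split.
 - unfold cnorm. replace (sum1 N _) with 0. rewrite sqrt_0; lra. symmetry. apply sum1_zero; intros; simpl; ring.
 - unfold cnorm, Tapply. replace (sum1 N _) with 0. rewrite sqrt_0; lra. symmetry. apply sum1_zero; intros; simpl.
   rewrite (sum1_zero N (fun n0 => Tent n n0 * 0)) by (intros; ring). ring. Qed.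

Theorem mainTheorem13 :
  exists a b : R, 0 < a /\ 0 < b /\
    forall N : nat, (2 <= N)%nat ->
      exists normT : R,
        is_lub (T_image_norms N) normT /\
        a / INR N < PI - normT /\ PI - normT < b * ln (INR N) / INR N.
Proof.
 exists (PI / 4), 10000. pose proof PI_RGT_0 as Hpi. pose proof PI_4 as Hpi4. split; [lra|]. split; [lra|].
 intros N HN.
 assert (HNr: 2 <= INR N) by (replace 2 with (INR 2) by (simpl; ring); apply le_INR; auto).
 assert (Hbd: bound (T_image_norms N)).
 { exists (Kup N). intros r [z [Hz ->]]. apply norm_upper; auto. lia. }
 destruct (completeness _ Hbd (ex_intro _ 0 (zero_in N))) as [normT Hlub].
 exists normT. split; [exact Hlub|].
 assert (Hup: normT <= Kup N).
 { apply Hlub. intros r [z [Hz ->]]. apply norm_upper; auto. lia. }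
 assert (Hge0: 0 <= normT) by (apply Hlub; apply zero_in).
 assert (Hln2: / 2 < ln 2) by apply ln_lt_2.
 assert (HlnN: ln 2 <= ln (INR N)) by (apply ln_mono; lra).
 split.
 - unfold Kup in Hup. assert (PI / 4 / INR N < PI * (3 / (8 * INR N))).
   { unfold Rdiv. rewrite Rinv_mult. apply Rmult_lt_reg_r with (INR N); [lra|].
     field_simplify; try lra. }
   lra.
 - destruct (Nat.lt_ge_cases N 512) as [Hsmall|Hbig].
   + assert (HN512: INR N < 512) by (replace 512 with (INR 512) by (simpl; ring); apply lt_INR; auto).
     assert (4 < 10000 * ln (INR N) / INR N).
     { assert (4 * INR N < 10000 * ln (INR N)) by lra.
       apply Rmult_lt_reg_r with (INR N); [lra|]. replace (10000 * ln (INR N) / INR N * INR N) with (10000 * ln (INR N)) by (field; lra). lra. }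
     lra.
   + set (p := Nat.log2 N). destruct (Nat.log2_spec N) as [Hp1 Hp2]; [lia|]. fold p in Hp1, Hp2.
     assert (Hp9: (9 <= p)%nat).
     { destruct (Nat.le_gt_cases 9 p) as [Hq|Hq]; auto. assert (Hq2: (2 ^ S p <= 2 ^ 9)%nat) by (apply Nat.pow_le_mono_r; lia).
       assert (Hq3: (2 ^ 9 = 512)%nat) by reflexivity. lia. }
     set (m := (2 * (p + 1))%nat). set (L := ((N - 1) / m)%nat).
     assert (Hm0: m <> 0%nat) by lia.
     pose proof (pow2_big p Hp9).
     assert (HL8: (8 <= L)%nat) by (apply Nat.div_le_lower_bound; lia).
     pose proof (Nat.div_mod (N - 1) m Hm0) as Hdm. pose proof (Nat.mod_upper_bound (N - 1) m Hm0) as Hmod.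
     fold L in Hdm.
     assert (HdegN: (1 + m * L <= N)%nat) by lia.
     assert (HNm: (N <= m * (L + 1))%nat) by lia.
     assert (HLN: (L <= N)%nat) by nia.
     destruct (lower_norm N L m HL8 HdegN) as [z [Hz Hlow]].
     assert (Hzn: cnorm N (Tapply N z) <= normT) by (apply Hlub; exists z; split; auto).
     set (eps := 6 / INR L + 4 * INR L * (4/9)^m) in *.
     assert (Hdiff: PI - normT <= 2 * PI * eps) by lra.
     assert (HLr: 8 <= INR L) by (replace 8 with (INR 8) by (simpl; ring); apply le_INR; auto).
     assert (HLNr: INR L <= INR N) by (apply le_INR; auto).
     assert (Hmr: INR m = 2 * (INR p + 1)) by (unfold m; rewrite mult_INR, plus_INR; simpl; ring).
     assert (HNmr: INR N <= INR m * (INR L + 1)).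
     { replace (INR L + 1) with (INR (L + 1)) by (rewrite plus_INR; simpl; ring). rewrite <- mult_INR. apply le_INR; auto. }
     assert (Hp2r: INR N < 2 ^ (p + 1)).
     { replace (p + 1)%nat with (S p) by lia. rewrite <- (pow_INR 2). replace (INR 2) with 2 by (simpl; ring).
       apply lt_INR; auto. }
     replace (INR 2) with 2 in Hp2r by (simpl; ring).
     assert (Hp1r: 2 ^ p <= INR N).
     { replace 2 with (INR 2) by (simpl; ring). rewrite <- pow_INR. apply le_INR; auto. }
     assert (Hplog: INR p * ln 2 <= ln (INR N)).
     { rewrite <- ln_pow by lra. apply ln_mono; auto. apply pow_lt; lra. }
     assert (Hpb: INR p <= 2 * ln (INR N)) by nra.
     assert (Hmb: INR m <= 8 * ln (INR N)) by nra.
     assert (T1: 6 / INR L <= 6.75 * INR m / INR N).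
     { apply Rmult_le_reg_r with (INR L * INR N). nra.
       replace (6 / INR L * (INR L * INR N)) with (6 * INR N) by (field; lra).
       replace (6.75 * INR m / INR N * (INR L * INR N)) with (6.75 * INR m * INR L) by (field; lra).
       assert (0 <= INR m) by apply pos_INR. assert (INR m * INR L >= 8 * INR m) by nra. nra. }
     assert (Hq: (4/9)^m <= (/ (2 ^ (p + 1)))^2).
     { unfold m. rewrite <- pow_inv. rewrite <- pow_mult.
       replace ((p + 1) * 2)%nat with (2 * (p + 1))%nat by lia. rewrite !pow_mult.
       apply pow_incr. split. apply pow2_ge_0. simpl. lra. }
     assert (Hq2: (/ (2 ^ (p + 1)))^2 <= / (INR N)^2).
     { rewrite <- (pow_inv (INR N) 2). apply pow_incr. split. left; apply Rinv_0_lt_compat; apply pow_lt; lra.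
       apply Rinv_le_contravar; lra. }
     assert (T2: 4 * INR L * (4/9)^m <= 4 / INR N).
     { assert (0 <= (4/9)^m) by (left; apply pow_lt; lra).
       apply Rle_trans with (4 * INR N * / INR N ^2). apply Rmult_le_compat; lra.
       right. field. lra. }
     assert (Heps: eps <= 62 * ln (INR N) / INR N).
     { unfold eps. apply Rle_trans with (6.75 * INR m / INR N + 4 / INR N). lra.
       apply Rmult_le_reg_r with (INR N). lra.
       replace ((6.75 * INR m / INR N + 4 / INR N) * INR N) with (6.75 * INR m + 4) by (field; lra).
       replace (62 * ln (INR N) / INR N * INR N) with (62 * ln (INR N)) by (field; lra). nra. }
     assert (Hpos: 0 < ln (INR N) / INR N) by (apply Rdiv_lt_0_compat; lra).
     assert (2 * PI * eps <= 8 * (62 * ln (INR N) / INR N)).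
     { apply Rmult_le_compat; try lra. unfold eps.
       assert (0 < 6 / INR L) by (apply Rdiv_lt_0_compat; lra).
       assert (0 <= 4 * INR L * (4/9)^m) by (assert (0 < (4/9)^m) by (apply pow_lt; lra); nra). lra. }
     unfold Rdiv in *. nra.
Qed.
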